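(* Let $(F_n)_{n\ge 0}$ be the Fibonacci sequence with $F_0=0$, $F_1=1$, $F_n=F_{n-1}+F_{n-2}$ for $n\ge2$. For every integer $k\in\mathbb{Z}$ (possibly negative) and every integer $m\ge 0$, $$[\underbrace{4,4,\dots,4}_{m},\,2k+3]=\frac{F_{3m+4}+k\,F_{3m+3}}{F_{3m+1}+k\,F_{3m}},$$ where the continued fraction has $m+1$ entries $a_0,\dots,a_m$ with $a_i=4$ for $0\le i<m$ and $a_m=2k+3$.
   Context: For numbers $a_0,a_1,\dots,a_m$, the finite continued fraction $[a_0,a_1,\dots,a_m]$ denotes $a_0+\cfrac{1}{a_1+\cfrac{1}{\ddots+\cfrac{1}{a_m}}}$, evaluated as a rational number; $[a_0]=a_0$. *)

(* Defs.v *)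
From mathcomp Require Import all_boot all_order all_algebra.
Set Implicit Arguments. Unset Strict Implicit. Unset Printing Implicit Defensive.
Import Order.TTheory GRing.Theory Num.Theory.
Local Open Scope ring_scope.

Fixpoint fib (n : nat) : nat :=
  match n with
  | 0 => 0
  | 1 => 1
  | (n'.+1 as m).+1 => fib m + fib n'
  end%N.

Fixpoint cf_aux (a : rat) (s : seq rat) : rat :=
  match s with
  | [::] => a
  | b :: s' => a + (cf_aux b s')^-1
  end.

(* finite continued fraction [a_0, ..., a_m] of a nonempty list (0 on [::], unused) *)
Definition contfrac (s : seq rat) : rat :=
  match s with
  | [::] => 0
  | a :: s' => cf_aux a s'
  end.

(* Main.v *)
Require Import Defs.
From mathcomp Require Import all_boot all_order all_algebra.
From mathcomp Require Import zify ring lra.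
Import Order.TTheory GRing.Theory Num.Theory.
Local Open Scope ring_scope.

Lemma fibS n : fib n.+2 = (fib n.+1 + fib n)%N.
Proof. by []. Qed.

Lemma fib_pos n : (0 < fib n.+1)%N.
Proof. elim: n => // n IH; rewrite fibS; lia. Qed.

Lemma fib6 n : fib n.+3.+3 = (4 * fib n.+3 + fib n)%N.
Proof. rewrite !fibS; lia. Qed.

Lemma fib6R n : ((fib n.+3.+3)%:R : rat) = 4 * (fib n.+3)%:R + (fib n)%:R.
Proof. by rewrite fib6 natrD natrM. Qed.

Lemma fib_bounds n :
  [/\ (0 < fib n.+3)%N, (fib n.+3 < fib n.+4)%N & (fib n.+4 < 2 * fib n.+3)%N].
Proof.
have h1 := fib_pos n; have h2 := fib_pos n.+1.
rewrite !fibS in h2 *; split; lia.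
Qed.

Lemma nz_int (a b : nat) (k : int) :
  (0 < b)%N -> (b < a)%N -> (a < 2 * b)%N -> (a%:Z + k * b%:Z != 0)%R.
Proof.
move=> h1 h2 h3.
have [k0|kn] := lerP 0 k.
  apply/negP=> /eqP; nia.
have [km|km] := eqVneq k (-1).
  rewrite km; apply/negP=> /eqP; lia.
have : k <= -2 by lia.
move=> hk; apply/negP=> /eqP; nia.
Qed.

Lemma nz_rat (n : nat) (k : int) :
  ((fib n.+4)%:R + k%:~R * (fib n.+3)%:R : rat) != 0.
Proof.
have [h1 h2 h3] := fib_bounds n.
have := nz_int _ _ k h1 h2 h3.
apply: contra => /eqP H.
rewrite -(intr_eq0 rat) intrD intrM /=.
by rewrite -H !pmulrn.
Qed.

Lemma contfrac_cons a s : s != [::] -> contfrac (a :: s) = a + (contfrac s)^-1.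
Proof. by case: s. Qed.

Theorem corollary2 (k : int) (m : nat) :
  contfrac (nseq m (4 : rat) ++ [:: ((2 * k + 3)%R)%:~R]) =
  ((fib (3 * m + 4))%:R + k%:~R * (fib (3 * m + 3))%:R) /
  ((fib (3 * m + 1))%:R + k%:~R * (fib (3 * m))%:R).
Proof.
elim: m => [|m IH].
  rewrite /= intrD intrM /=; by field.
change (nseq m.+1 (4:rat)) with ((4:rat) :: nseq m 4); rewrite cat_cons contfrac_cons; last by case: m {IH}.
rewrite IH.
have -> : (3 * m.+1 + 4 = (3 * m + 1).+3.+3)%N by lia.
have -> : (3 * m.+1 + 3 = (3 * m).+3.+3)%N by lia.
have -> : (3 * m.+1 + 1 = (3 * m).+4)%N by lia.
have -> : (3 * m.+1 = (3 * m).+3)%N by lia.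
have -> : (3 * m + 4 = (3 * m + 1).+3)%N by lia.
have -> : (3 * m + 3 = (3 * m).+3)%N by lia.
rewrite !fib6R.
have hN := nz_rat (3 * m) k.
have hD : ((fib (3 * m + 1))%:R + k%:~R * (fib (3 * m))%:R : rat) != 0.
  case: m {IH hN} => [|m]; first by rewrite /= mulr0 addr0 oner_eq0.
  have -> : (3 * m.+1 + 1 = (3 * m).+4)%N by lia.
  have -> : (3 * m.+1 = (3 * m).+3)%N by lia.
  exact: nz_rat.
have -> : ((3 * m + 1).+3 = (3 * m).+4)%N by lia.
move: hN hD.
set a := (fib _)%:R; set b := (fib _)%:R; set c := (fib _)%:R; set d := (fib _)%:R.
move=> hN hD.
field; by rewrite ?hN ?hD.
Qed.
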